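(* Let $p$ be prime, $n\ge2$, and let $A_0,\dots,A_{p^n-1}$ be symmetric $n\times n$ matrices over $\mathbb{Z}_p$ such that the $p^n$ graph-state bases $\mathcal{B}_{A_0},\dots,\mathcal{B}_{A_{p^n-1}}$ together with the computational basis form a complete set of $p^n+1$ mutually unbiased bases of $(\mathbb{C}^p)^{\otimes n}$. Let $X\cup Y=\{1,\dots,n\}$ be a bipartition of the qupits with $|X|=n_X$, $|Y|=n_Y$, and let $\Gamma_i^{(X|Y)}$ be the $n_X\times n_Y$ submatrix of $A_i$ with rows indexed by $X$ and columns by $Y$. Then $$1+\sum_{i=0}^{p^n-1}p^{-\mathrm{rank}(\Gamma_i^{(X|Y)})}=p^{n_X}+p^{n_Y},$$ where ranks are computed over $\mathbb{Z}_p$; equivalently, the average purity $\frac{1}{p^n+1}\big(1+\sum_i p^{-\mathrm{rank}(\Gamma_i^{(X|Y)})}\big)$ of the reduced states on $X$ over one element from each basis equals $\frac{d_X+d_Y}{d_Xd_Y+1}$ with $d_X=p^{n_X}$, $d_Y=p^{n_Y}$.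
   Context: Let $\omega_p=e^{2\pi i/p}$. On $\mathbb{C}^p$ let $|+\rangle=p^{-1/2}\sum_{k}|k\rangle$ and $Z=\sum_k\omega_p^k|k\rangle\langle k|$. On $(\mathbb{C}^p)^{\otimes n}$ define $U_{i,i}=\sum_{k=0}^{1}i^k|k\rangle\langle k|_i$ if $p=2$ and $U_{i,i}=\sum_{k=0}^{p-1}\omega_p^{k(k-1)/2}|k\rangle\langle k|_i$ if $p\ge3$, and for $i\ne j$, $U_{i,j}=\sum_{k,l}\omega_p^{kl}|k\rangle\langle k|_i\otimes|l\rangle\langle l|_j$. For symmetric $A$ over $\mathbb{Z}_p$, $|G_A\rangle=\prod_{i\le j}U_{i,j}^{A_{i,j}}|+\rangle^{\otimes n}$ and $\mathcal{B}_A=\{Z^{m_1}\otimes\cdots\otimes Z^{m_n}|G_A\rangle\}_{m_i\in\mathbb{Z}_p}$. Bases of $\mathbb{C}^d$ are mutually unbiased if all cross overlaps have squared modulus $1/d$; a complete set has $d+1$ such bases. The purity of a reduced state $\rho_X=\mathrm{tr}_Y|\psi\rangle\langle\psi|$ is $\mathrm{tr}(\rho_X^2)$. *)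

(* Defs.v *)
From HB Require Import structures.
From mathcomp Require Import all_boot all_order all_algebra all_field.
Set Implicit Arguments. Unset Strict Implicit. Unset Printing Implicit Defensive.
Import Order.TTheory GRing.Theory Num.Theory.
Local Open Scope ring_scope.

(* omega_p = e^{2 pi i / p}.  p.-root (-1) is the p-th root of -1 with minimal
   nonnegative argument, i.e. e^{i pi / p}; its square is e^{2 pi i / p}. *)
Definition omega (p : nat) : algC := (p.-root (-1)) ^+ 2.

Definition label (p n : nat) := {ffun 'I_n -> 'I_p}.

(* Vectors of (C^p)^{\otimes n}, given by their coordinates in the computational basis. *)
Definition qvec (p n : nat) := label p n -> algC.

Definition qbasis (p n : nat) := label p n -> qvec p n.

Definition inner (p n : nat) (u v : qvec p n) : algC :=
  \sum_(k : label p n) (u k)^* * v k.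

(* Diagonal entry of U_{i,j} at computational basis state |k>. *)
Definition Uentry (p n : nat) (i j : 'I_n) (k : label p n) : algC :=
  if i == j then
    (if p == 2%N then 'i ^+ (k i : nat)
     else omega p ^+ (((k i : nat) * (k i).-1) %/ 2))
  else omega p ^+ ((k i : nat) * (k j : nat)).

(* |G_A> = prod_{i<=j} U_{i,j}^{A_{i,j}} |+>^{\otimes n}; all U_{i,j} are diagonal
   in the computational basis and |+>^{\otimes n} = p^{-n/2} sum_k |k>, so the
   coordinate of |G_A> on |k> is p^{-n/2} prod_{i<=j} (U_{i,j}(k))^{A_{i,j}}. *)
Definition graph_state (p n : nat) (A : 'M['F_p]_n) : qvec p n :=
  fun k => (sqrtC (p%:R))^-1 ^+ n *
           \prod_(i : 'I_n) \prod_(j : 'I_n | (i <= j)%N) Uentry i j k ^+ (A i j : nat).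

(* B_A = { Z^{m_1} (x) ... (x) Z^{m_n} |G_A> }_m *)
Definition graph_basis (p n : nat) (A : 'M['F_p]_n) : qbasis p n :=
  fun m k => (\prod_(i : 'I_n) omega p ^+ ((m i : nat) * (k i : nat))) * graph_state A k.

Definition comp_basis (p n : nat) : qbasis p n :=
  fun m k => if m == k then 1 else 0.

Definition orthonormal_basis (p n : nat) (B : qbasis p n) : Prop :=
  forall m m', inner (B m) (B m') = if m == m' then 1 else 0.

Definition mutually_unbiased (p n : nat) (B B' : qbasis p n) : Prop :=
  forall m m', `|inner (B m) (B' m')| ^+ 2 = ((p ^ n)%:R)^-1.

(* A family of bases indexed by a finite type I is a set of #|I| mutually
   unbiased bases: each is an orthonormal basis (#labels = dimension) and
   distinct members are mutually unbiased. *)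
Definition MUB_family (p n : nat) (I : finType) (F : I -> qbasis p n) : Prop :=
  (forall t, orthonormal_basis (F t)) /\
  (forall t t', t != t' -> mutually_unbiased (F t) (F t')).

Definition complete_graph_MUB (p n : nat) (A : 'I_(p ^ n) -> 'M['F_p]_n) : Prop :=
  MUB_family (fun t : option 'I_(p ^ n) =>
                match t with None => @comp_basis p n | Some i => graph_basis (A i) end).

Definition Gamma (F : Type) (n : nat) (X : {set 'I_n}) (M : 'M[F]_n)
  : 'M[F]_(#|X|, #|~: X|) :=
  \matrix_(r < #|X|, c < #|~: X|) M (enum_val r) (enum_val c).

(* Main.v *)
Require Import Defs.
From mathcomp Require Import all_boot all_order all_algebra all_field.
From mathcomp Require Import zify ring.
Import Order.TTheory GRing.Theory Num.Theory.
Local Open Scope ring_scope.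
Set Implicit Arguments. Unset Strict Implicit. Unset Printing Implicit Defensive.


Section Roots.
Variable p : nat.
Hypothesis pp : prime p.
Let p_gt0 : (0 < p)%N := prime_gt0 pp.

Lemma om_p : omega p ^+ p = 1.
Proof. by rewrite /omega -exprM mulnC exprM rootCK // sqrrN expr1n. Qed.

Lemma om_mod x : omega p ^+ (x %% p) = omega p ^+ x.
Proof. exact: expr_mod om_p. Qed.

Lemma om_pM x : omega p ^+ (p * x)%N = 1.
Proof. by rewrite exprM om_p expr1n. Qed.

Lemma norm_om : `|omega p| = 1.
Proof.
apply/eqP; rewrite -(pexpr_eq1 p_gt0) ?normr_ge0 //.
by rewrite -normrX om_p normr1.
Qed.

Lemma conj_om x : (omega p ^+ x)^* * omega p ^+ x = 1.
Proof. by rewrite -normCKC normrX norm_om !expr1n. Qed.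

Lemma om2 : omega 2 = -1.
Proof. by rewrite /omega rootCK. Qed.

Lemma ev k : (2 %| k * k.-1)%N.
Proof. case: k => [|k] //=; rewrite dvdn2 oddM /= ; by case: (odd k). Qed.

Lemma c2E x : ((x * x.-1) %/ 2 = 'C(x, 2))%N.
Proof. by rewrite bin2 divn2. Qed.

Lemma c2D a b : ((a+b)*(a+b).-1 %/ 2 = (a*a.-1) %/ 2 + (b*b.-1) %/2 + a * b)%N.
Proof.
rewrite !c2E; elim: b => [|b IH]; first by rewrite addn0 bin0n muln0 !addn0.
rewrite addnS !binS IH !bin1; lia.
Qed.

Lemma diag_odd a b : p != 2%N -> (a < p)%N -> (b < p)%N ->
  omega p ^+ ((((a + b) %% p) * ((a+b) %% p).-1) %/ 2)%N =
  omega p ^+ ((a * a.-1) %/ 2)%N * omega p ^+ ((b * b.-1) %/ 2)%N * omega p ^+ (a * b)%N.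
Proof.
move=> p2 ha hb; rewrite -!exprD -c2D.
have podd : odd p.
  by case/even_prime: pp => [e|//]; rewrite e in p2.
case: (ltnP (a + b) p) => hab; first by rewrite modn_small.
have [t ht] : exists t, (a + b = t + p)%N by exists (a + b - p)%N; lia.
have htp : (t < p)%N by lia.
rewrite ht modnDr modn_small // c2D.
have -> : (p * p.-1 %/ 2 = p * (p.-1 %/ 2))%N.
  by rewrite muln_divA // dvdn2 -oddS prednK.
by rewrite !exprD om_pM mulr1 (mulnC t p) om_pM mulr1.
Qed.

Lemma diag_two a b : (a < 2)%N -> (b < 2)%N ->
  'i ^+ ((a + b) %% 2) = 'i ^+ a * 'i ^+ b * omega 2 ^+ (a * b)%N.
Proof.
rewrite om2; case: a => [|[|//]] _; case: b => [|[|//]] _;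
  rewrite ?expr0 ?expr1 ?mul1r ?mulr1 //=.
by rewrite -expr2 sqrCi mulN1r opprK.
Qed.

Lemma off_diag a b c d :
  omega p ^+ (((a + b) %% p) * ((c + d) %% p))%N =
  omega p ^+ (a * c)%N * omega p ^+ (b * d)%N * omega p ^+ (a * d + b * c)%N.
Proof.
rewrite -om_mod modnMml modnMmr om_mod -!exprD; congr (_ ^+ _); ring.
Qed.

End Roots.


Lemma diag_two' q a b : q = 2%N -> (a < 2)%N -> (b < 2)%N ->
  'i ^+ ((a + b) %% q) = 'i ^+ a * 'i ^+ b * omega q ^+ (a * b)%N.
Proof. move=> ->; exact: diag_two. Qed.

Section Graph.
Variables p n : nat.
Hypothesis pp : prime p.
Let p_gt0 : (0 < p)%N := prime_gt0 pp.

Definition shl (k v : label p n) : label p n :=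
  [ffun i => Ordinal (ltn_pmod (k i + v i) p_gt0)].

Lemma shl_inj v : injective (fun k => shl k v).
Proof.
move=> k k' /ffunP h; apply/ffunP => i; move: (h i); rewrite !ffunE.
move/(congr1 val) => /= /eqP; rewrite eqn_modDr !modn_small // => /eqP e.
exact: val_inj.
Qed.

Definition Wt (k v : label p n) (i j : 'I_n) : algC :=
  if i == j then omega p ^+ (k i * v i)%N
  else omega p ^+ (k i * v j + v i * k j)%N.

Lemma Ushift i j k v :
  Uentry i j (shl k v) = Uentry i j k * Uentry i j v * Wt k v i j.
Proof.
rewrite /Uentry /Wt !ffunE /=; case: (eqVneq i j) => [e|ne].
  subst j.
  case: (eqVneq p 2%N) => [p2|p2].
    have ha : ((k i : nat) < 2)%N by rewrite -p2.
    have hb : ((v i : nat) < 2)%N by rewrite -p2.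
    by rewrite diag_two'.
  by rewrite diag_odd.
by rewrite ?natrME off_diag.
Qed.

Definition G (A : 'M['F_p]_n) (k : label p n) : algC :=
  \prod_(i : 'I_n) \prod_(j : 'I_n | (i <= j)%N) Uentry i j k ^+ (A i j : nat).

Lemma Gshift A k v : G A (shl k v) =
  G A k * G A v * \prod_(i : 'I_n) \prod_(j : 'I_n | (i <= j)%N) Wt k v i j ^+ (A i j : nat).
Proof.
rewrite /G -!big_split /=; apply: eq_bigr => i _; rewrite -!big_split /=.
by apply: eq_bigr => j _; rewrite Ushift !exprMn.
Qed.

Lemma Wsum (A : 'M['F_p]_n) (Asym : A^T = A) (k v : label p n) :
  (\sum_(i : 'I_n) \sum_(j : 'I_n | (i <= j)%N)
     (if i == j then k i * v i else k i * v j + v i * k j) * A i j =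
   \sum_(i : 'I_n) k i * \sum_(j : 'I_n) A i j * v j)%N.
Proof.
have sym : forall i j, (A j i : nat) = A i j by move=> i j; rewrite -{1}Asym mxE.
pose f1 := fun i j : 'I_n => (if (i <= j)%N then A i j * k i * v j else 0)%N.
pose f2 := fun i j : 'I_n => (if (i < j)%N then A i j * v i * k j else 0)%N.
pose f3 := fun i j : 'I_n => (if (j < i)%N then A i j * k i * v j else 0)%N.
have -> : (\sum_(i : 'I_n) \sum_(j : 'I_n | (i <= j)%N)
     (if i == j then k i * v i else k i * v j + v i * k j) * A i j =
     \sum_(i : 'I_n) \sum_(j : 'I_n) (f1 i j + f2 i j))%N.
  apply: eq_bigr => i _; rewrite big_mkcond /=; apply: eq_bigr => j _.
  rewrite /f1 /f2; case: (eqVneq i j) => [<-|ne]; first by rewrite leqnn ltnn; lia.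
  have : (val i != val j) by [].
  case: (ltngtP i j) => // h _; rewrite ?(ltnW h) //; try lia.
have -> : (\sum_(i : 'I_n) k i * \sum_(j : 'I_n) A i j * v j =
     \sum_(i : 'I_n) \sum_(j : 'I_n) (f1 i j + f3 i j))%N.
  apply: eq_bigr => i _; rewrite big_distrr /=; apply: eq_bigr => j _.
  rewrite /f1 /f3; by case: (leqP i j) => h; rewrite ?addn0 ?add0n mulnCA mulnA.
rewrite !(eq_bigr _ (fun i _ => big_split _ _ _ _ _)) /= !big_split /=; congr (_ + _)%N.
rewrite exchange_big /=; apply: eq_bigr => i _; apply: eq_bigr => j _.
by rewrite /f2 /f3 sym; case: ifP => //; lia.
Qed.

End Graph.


Section Key.
Variables p n : nat.
Hypothesis pp : prime p.
Let p_gt0 : (0 < p)%N := prime_gt0 pp.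

Definition chi (m k : label p n) : algC := \prod_(i : 'I_n) omega p ^+ (m i * k i)%N.

Lemma chi_shl m k v : chi m (shl pp k v) = chi m k * chi m v.
Proof.
rewrite /chi -big_split; apply: eq_bigr => i _ /=.
by rewrite ffunE /= -exprD -om_mod // modnMmr om_mod // mulnDr.
Qed.

Definition cc : algC := (sqrtC (p%:R))^-1 ^+ n.

Lemma gb_eq (A : 'M['F_p]_n) m k : graph_basis A m k = chi m k * (cc * G A k).
Proof. by []. Qed.

Lemma cc_conj : cc^* = cc.
Proof. by rewrite geC0_conj // exprn_ge0 // invr_ge0 sqrtC_ge0 ler0n. Qed.


Lemma key (A A' : 'M['F_p]_n) (Asym : A^T = A) (A'sym : A'^T = A')
  (hmub : mutually_unbiased (graph_basis A) (graph_basis A'))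
  (horth : orthonormal_basis (graph_basis A))
  (v : 'rV['F_p]_n) : v != 0 -> v *m A = v *m A' -> False.
Proof.
move=> vnz vAA.
have hv : forall i, ((v ord0 i : nat) < p)%N.
  by move=> i; apply: (leq_trans (ltn_ord (v ord0 i))); rewrite Fp_cast.
pose vl : label p n := [ffun i => Ordinal (hv i)].
have vlE : forall i, (vl i : nat) = v ord0 i by move=> i; rewrite ffunE.
have rowE : forall (B : 'M['F_p]_n), B^T = B -> forall i,
    ((v *m B) ord0 i : nat) = ((\sum_j B i j * vl j) %% p)%N.
  move=> B Bsym i; rewrite -val_Fp_nat // natr_sum mxE; congr val.
  apply: eq_bigr => j _; rewrite natrM vlE !natr_Zp mulrC.
  by rewrite -{1}Bsym mxE.
have smod : forall i, ((\sum_j A i j * vl j) %% p = (\sum_j A' i j * vl j) %% p)%N.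
  by move=> i; rewrite -rowE // -rowE // vAA.
have Pform : forall (B : 'M['F_p]_n), B^T = B -> forall k,
   \prod_(i : 'I_n) \prod_(j : 'I_n | (i <= j)%N) Wt k vl i j ^+ (B i j : nat) =
   omega p ^+ (\sum_i k i * \sum_j B i j * vl j)%N.
  move=> B Bsym k; rewrite -Wsum // -prodrXr; apply: eq_bigr => i _.
  rewrite -prodrXr; apply: eq_bigr => j _; rewrite /Wt.
  by case: ifP => _; rewrite -exprM.
have PAA : forall k,
   \prod_(i : 'I_n) \prod_(j : 'I_n | (i <= j)%N) Wt k vl i j ^+ (A i j : nat) =
   \prod_(i : 'I_n) \prod_(j : 'I_n | (i <= j)%N) Wt k vl i j ^+ (A' i j : nat).
  move=> k; rewrite !Pform // -!prodrXr; apply: eq_bigr => i _.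
  by rewrite !(mulnC (k i)) !exprM -om_mod // smod om_mod.
pose m0 : label p n := [ffun _ => Ordinal p_gt0].
have chi0 : forall k, chi m0 k = 1.
  by move=> k; rewrite /chi big1 // => i _; rewrite ffunE /= mul0n expr0.
pose mu m' := (G A vl)^* * G A' vl * chi m' vl.
have Fshift : forall m' k,
   (graph_basis A m0 (shl pp k vl))^* * graph_basis A' m' (shl pp k vl) =
   (graph_basis A m0 k)^* * graph_basis A' m' k * mu m'.
  move=> m' k; rewrite !gb_eq !chi_shl !Gshift -PAA !chi0 !mul1r /mu.
  set P := \prod_(i : 'I_n) _.
  have hP : P^* * P = 1 by rewrite /P Pform // conj_om.
  rewrite !rmorphM /= cc_conj.
  rewrite -[RHS]mulr1 -hP; ring.
have mu1 : forall m', mu m' = 1.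
  move=> m'; have := hmub m0 m'.
  rewrite /inner (reindex_inj (@shl_inj p n pp vl)) /=.
  under eq_bigr do rewrite Fshift.
  rewrite -mulr_suml; set S := \sum_k _ => hS.
  have Snz : S != 0.
    apply/eqP => S0; move: hS; rewrite S0 mul0r normr0 expr0n /= => /eqP.
    by rewrite eq_sym invr_eq0 pnatr_eq0 expn_eq0 eqn0Ngt p_gt0.
  have : S * mu m' = S.
    rewrite /S mulr_suml.
    rewrite [RHS](reindex_inj (@shl_inj p n pp vl)) /=.
    by apply: eq_bigr => k _; rewrite Fshift.
  move/eqP; rewrite -subr_eq0 -{2}[S]mulr1 -mulrBr mulf_eq0 (negbTE Snz) /=.
  by rewrite subr_eq0 => /eqP.
have lam1 : (G A vl)^* * G A' vl = 1.
  by have := mu1 m0; rewrite /mu chi0 mulr1.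
have [a va] : exists a, v ord0 a != 0.
  apply/existsP; apply: contraNT vnz; rewrite negb_exists => /forallP h.
  apply/eqP/matrixP => i j; rewrite (ord1 i) mxE; exact/eqP/negPn/h.
have p1 : (1 < p)%N by exact: prime_gt1.
pose e : label p n := [ffun i => if i == a then Ordinal p1 else Ordinal p_gt0].
have chie : chi e vl = omega p ^+ (v ord0 a).
  rewrite /chi (bigD1 a) //= big1 ?mulr1; first by rewrite !ffunE eqxx /= mul1n.
  by move=> i /negbTE ia; rewrite ffunE ia /= mul0n expr0.
have omva : omega p ^+ (v ord0 a) = 1.
  by have := mu1 e; rewrite /mu lam1 mul1r chie.
have om_ne1 : omega p != 1.
  apply/eqP => om1.
  have := horth m0 e.
  have -> : m0 == e = false.
    apply/negbTE/eqP => /ffunP /(_ a); rewrite !ffunE eqxx => /(congr1 val) //.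
  have chi1 : forall m k, chi m k = 1.
    by move=> m k; rewrite /chi big1 // => i _; rewrite om1 expr1n.
  have -> : inner (graph_basis A m0) (graph_basis A e) =
            inner (graph_basis A m0) (graph_basis A m0).
    by apply: eq_bigr => k _; rewrite !gb_eq !chi1.
  by rewrite horth eqxx => /eqP; rewrite oner_eq0.
have [m pm mdvd] := prim_order_exists p_gt0 (om_p pp).
case/primeP: pp => _ /(_ m mdvd) /orP [/eqP m1 | /eqP mp].
  by move: (prim_expr_order pm); rewrite m1 expr1 => /eqP; rewrite (negbTE om_ne1).
move: (prim_order_dvd pm (v ord0 a)); rewrite omva eqxx mp => /dvdn_leq.
have : (0 < v ord0 a)%N by rewrite lt0n; apply: contra va => /eqP h; apply/eqP/val_inj.
by move=> h /(_ h); rewrite leqNgt hv.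
Qed.

End Key.


Section Count.
Variable F : finFieldType.

Lemma card_sub m k (M : 'M[F]_(k, m)) :
  #|[set w : 'rV[F]_m | (w <= M)%MS]| = (#|F| ^ \rank M)%N.
Proof.
have -> : [set w : 'rV[F]_m | (w <= M)%MS] =
          [set v *m row_base M | v : 'rV[F]_(\rank M)].
  apply/setP => w; rewrite inE; apply/idP/imsetP.
    by rewrite -(eq_row_base M) => /submxP [D ->]; exists D.
  by move=> [v _ ->]; rewrite -(eq_row_base M) submxMl.
rewrite card_imset; last exact: row_free_inj (row_base_free M).
by rewrite cardT -cardE card_mx mul1n.
Qed.

Lemma card_ker m k (B : 'M[F]_(m, k)) :
  #|[set w : 'rV[F]_m | w *m B == 0]| = (#|F| ^ (m - \rank B))%N.
Proof.
rewrite -mxrank_ker -card_sub.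
have -> : [set w : 'rV[F]_m | w *m B == 0] = [set w | (w <= kermx B)%MS].
  by apply/setP => w; rewrite !inE sub_kermx.
by [].
Qed.

Definition Emx n k (f : 'I_k -> 'I_n) : 'M[F]_(k, n) := rowsub f 1%:M.

Lemma EEt n k (f : 'I_k -> 'I_n) : injective f -> Emx f *m (Emx f)^T = 1%:M.
Proof.
move=> fi; rewrite /Emx -rowsubE; apply/matrixP => i j.
by rewrite !mxE (inj_eq fi) eq_sym.
Qed.

Lemma rank_Emx n k (f : 'I_k -> 'I_n) : injective f -> \rank (Emx f) = k.
Proof.
move=> fi; apply/eqP; rewrite eqn_leq rank_leq_row /=.
by rewrite -{1}(mxrank1 F k) -(EEt fi) mxrankM_maxl.
Qed.

Lemma Gamma_E n (X : {set 'I_n}) (M : 'M[F]_n) :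
  Gamma X M = Emx (fun r : 'I_#|X| => enum_val r) *m M *m
              (Emx (fun c : 'I_#|~: X| => enum_val c))^T.
Proof.
rewrite /Emx -rowsubE -[_ *m _^T]trmxK trmx_mul trmxK -rowsubE.
by apply/matrixP => r c; rewrite !mxE.
Qed.

Lemma card_bij_pred (I T : finType) (f : I -> T) (P : pred T) :
  injective f -> #|I| = #|T| -> #|[set i | P (f i)]| = #|[set x | P x]|.
Proof.
move=> fi hc; have [g fg gf] := inj_card_bij fi (eq_leq (esym hc)).
have -> : [set x | P x] = f @: [set i | P (f i)].
  apply/setP => x; rewrite inE; apply/idP/imsetP.
    by move=> Px; exists (g x); rewrite ?inE gf.
  by move=> [i]; rewrite inE => Pi ->.
by rewrite card_imset.
Qed.

Lemma card_setE (T : finType) (P : pred T) : #|[set x | P x]| = (\sum_x (P x : nat))%N.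
Proof.
rewrite -sum1_card big_mkcond /=; apply: eq_bigr => x _; rewrite inE; by case: (P x).
Qed.

End Count.


Unset Implicit Arguments.

Theorem mainTheorem6 (p n : nat) (pp : prime p) (n2 : (2 <= n)%N)
  (A : 'I_(p ^ n) -> 'M['F_p]_n)
  (Asym : forall i, (A i)^T = A i)
  (hMUB : complete_graph_MUB A)
  (X : {set 'I_n}) (hX0 : X != set0) (hXT : X != setT) :
  1 + \sum_(i < p ^ n) ((p%:R : algC) ^- \rank (Gamma X (A i)))
  = (p ^ #|X|)%:R + (p ^ #|~: X|)%:R.
Proof.
have p_gt0 := prime_gt0 pp.
have hn : (#|X| + #|~: X| = n)%N by rewrite cardsC card_ord.
have [horth hmub] := hMUB.
have inj : forall w : 'rV['F_p]_n, w != 0 -> injective (fun i => w *m A i).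
  move=> w wnz i j /= e; apply/eqP; apply/negPn/negP => ne.
  have ne' : Some i != Some j by apply: contra ne => /eqP [->].
  exact: (key pp (Asym i) (Asym j) (hmub _ _ ne') (horth (Some i)) wnz e).
pose EX := Emx 'F_p (fun r : 'I_#|X| => enum_val r).
pose EY := Emx 'F_p (fun c : 'I_#|~: X| => enum_val c).
have GE : forall i, Gamma X (A i) = EX *m A i *m EY^T by move=> i; exact: Gamma_E.
have count_u : forall u : 'rV['F_p]_#|X|, u != 0 ->
    #|[set i | u *m Gamma X (A i) == 0]| = (p ^ #|X|)%N.
  move=> u unz.
  have -> : [set i | u *m Gamma X (A i) == 0] =
            [set i | (fun w => w *m EY^T == 0) ((u *m EX) *m A i)].
    by apply/setP => i; rewrite !inE GE !mulmxA.
  have uE : u *m EX != 0.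
    apply: contra unz => /eqP h; apply/eqP.
    by rewrite -(mulmx1 u) -(@EEt 'F_p _ _ _ (@enum_val_inj _ (mem X))) mulmxA h mul0mx.
  rewrite (@card_bij_pred _ _ _ (fun w : 'rV['F_p]_n => w *m EY^T == 0) (inj _ uE)); last first.
    by rewrite card_ord card_mx card_Fp // mul1n.
  rewrite card_ker card_Fp // mxrank_tr rank_Emx; last exact: enum_val_inj.
  by rewrite -(addnK #|~: X| #|X|) hn.
have cardK : forall i, #|[set u : 'rV['F_p]_#|X| | u *m Gamma X (A i) == 0]| =
                      (p ^ (#|X| - \rank (Gamma X (A i))))%N.
  by move=> i; rewrite card_ker card_Fp.
have N : (\sum_(i < p ^ n) p ^ (#|X| - \rank (Gamma X (A i))) =
          p ^ n + (p ^ #|X|).-1 * p ^ #|X|)%N.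
  under eq_bigr do rewrite -cardK card_setE.
  rewrite exchange_big (bigD1 0) //=.
  have -> : (\sum_(i < p ^ n) ((0 : 'rV['F_p]_#|X|)%R *m Gamma X (A i) == 0%R) = p ^ n)%N.
    transitivity (\sum_(i < p ^ n) 1)%N.
      by apply: eq_bigr => i _; rewrite mul0mx eqxx.
    by rewrite sum1_card card_ord.
  congr (_ + _)%N.
  under eq_bigr => u unz do rewrite -card_setE (count_u u unz).
  by rewrite sum_nat_const cardC1 card_mx card_Fp // mul1n.
set P := (p%:R : algC).
have Pnz : P != 0 by rewrite pnatr_eq0 -lt0n.
have Pk : forall k, P ^+ k != 0 by move=> k; rewrite expf_neq0.
apply: (mulIf (Pk #|X|)).
have S : (\sum_(i < p ^ n) P ^- \rank (Gamma X (A i))) * P ^+ #|X| =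
         (p ^ n + (p ^ #|X|).-1 * p ^ #|X|)%:R.
  rewrite -N natr_sum mulr_suml; apply: eq_bigr => i _.
  have hr : (\rank (Gamma X (A i)) <= #|X|)%N by exact: rank_leq_row.
  have e : P ^+ #|X| = P ^+ (#|X| - \rank (Gamma X (A i))) * P ^+ \rank (Gamma X (A i)).
    by rewrite -exprD subnK.
  by rewrite natrX e mulrC -mulrA mulfV ?Pk // mulr1.
rewrite mulrDl mul1r S natrD natrM -subn1 natrB ?expn_gt0 ?p_gt0 //.
have pn : (p ^ n = p ^ #|X| * p ^ #|~: X|)%N by rewrite -expnD hn.
rewrite pn !natrM !natrX; ring.
Qed.
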